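(* Consider the many-server system described in the context under any load balancing policy for which the state process is an irreducible finite CTMC, and let $S$ be its stationary state. Let $\Delta=\frac{\log N}{\sqrt N}$, $\eta=\lambda+k\Delta$, $h(x)=\max\{x-\eta,0\}$ and $g'(x)=-\frac{\max\{x-\eta,0\}}{\Delta}$. Let $D_1=\sum_{m=1}^M w_m S_{1,m}$. Then $$\mathbb E\left[h\left(\sum_{i=1}^b S_i\right)\right]\leq J_1+\frac{5\mu_{\max}+\lambda}{\sqrt N\log N},$$ where $$J_1=\mathbb E\left[g'\left(\sum_{i=1}^bS_i\right)\bigl(\lambda A_b(S)-\lambda-\Delta+D_1\bigr)\mathbb I\Bigl\{\sum_{i=1}^bS_i>\eta+\tfrac1N\Bigr\}\right].$$
   Context: System: $N\ge2$ identical servers, each able to hold at most $b$ jobs ($b\ge1$ finite), FIFO; a job routed to a server holding $b$ jobs is discarded. Poisson arrivals of rate $\lambda N$, $\lambda=1-N^{-\alpha}$, $0<\alpha<1/2$. Service times i.i.d. Coxian with $M$ phases: phase $m$ exponential with rate $\mu_m>0$; after phase $m<M$ the job enters phase $m+1$ with probability $p_m\in[0,1)$, otherwise departs; after phase $M$ it departs. $v_m=\prod_{i=1}^{m-1}p_i/\mu_m$ with $\sum_mv_m=1$; $\bar v=\min_mv_m$. $S_{i,m}$ = fraction of servers with at least $i$ jobs whose job in service is in phase $m$, $S_i=\sum_mS_{i,m}$; the policy routes arrivals based on the current state. $A_b(s)$ = probability an incoming job is routed to a server with at least $b$ jobs given state $s$. Constants: $w_m=(1-p_m)\mu_m$ for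 $m<M$, $w_M=\mu_M$; $w_u=\max_mw_m$, $w_l=\min_mw_m$, $\mu_{\max}=\max_m\mu_m$; for $2\le m\le M$, $a_m=\frac{\mu_m}{p_1\mu_1+\mu_m}$, $b_m=(1-a_m)(1+\sum_{r=m+1}^M\frac{v_r}{v_1})-\frac{a_mv_m}{v_1}$; $\xi=\sum_{m=2}^Mb_m\prod_{j=m+1}^Ma_j$ (asserted $0<\xi<1$), $C=\sqrt{\frac{2\bar v^2\log(1/\xi)}{3M+(3M+4)\log(1/\xi)}}$, $\theta_m=\frac{6\mu_1v_m+5(m-1)v_m}{C}$, $\zeta=\frac{4w_ub}{w_l}\bigl[(\frac1{w_l}-\frac1{w_u})\sum_m\theta_mw_m+\frac1{w_l}+6\bigr]$, $k=\frac{\sum_m\theta_mw_m}{w_u}+(1+\frac{w_l}{4w_ub})\zeta-\sum_m\theta_m$. *)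

(* Defs.v *)
From HB Require Import structures.
From mathcomp Require Import all_boot all_order all_algebra.
From mathcomp Require Import all_classical all_reals all_analysis.
Set Implicit Arguments. Unset Strict Implicit. Unset Printing Implicit Defensive.
Import Order.TTheory GRing.Theory Num.Theory.
Local Open Scope ring_scope.

Section Model.
Variable R : realType.

Variables (N b M : nat).
Variables (mu p : nat -> R).

Definition vv (m : nat) : R := (\prod_(1 <= i < m) p i) / mu m.
Definition vbar : R := \big[Num.min/vv 1]_(1 <= m < M.+1) vv m.
Definition ww (m : nat) : R := if (m < M)%N then (1 - p m) * mu m else mu m.
Definition wu : R := \big[Num.max/ww 1]_(1 <= m < M.+1) ww m.
Definition wl : R := \big[Num.min/ww 1]_(1 <= m < M.+1) ww m.
Definition mumax : R := \big[Num.max/mu 1]_(1 <= m < M.+1) mu m.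
Definition aa (m : nat) : R := mu m / (p 1 * mu 1 + mu m).
Definition bb (m : nat) : R :=
  (1 - aa m) * (1 + \sum_(m.+1 <= r < M.+1) vv r / vv 1) - aa m * vv m / vv 1.
Definition xi : R :=
  \sum_(2 <= m < M.+1) bb m * \prod_(m.+1 <= j < M.+1) aa j.
Definition Cc : R :=
  Num.sqrt (2 * vbar ^+ 2 * ln (xi^-1) /
            (3 * M%:R + (3 * M%:R + 4) * ln (xi^-1))).
Definition theta (m : nat) : R :=
  (6 * mu 1 * vv m + 5 * (m.-1)%:R * vv m) / Cc.
Definition sum_theta_w : R := \sum_(1 <= m < M.+1) theta m * ww m.
Definition sum_theta : R := \sum_(1 <= m < M.+1) theta m.
Definition zeta (b : nat) : R :=
  4 * wu * b%:R / wl * ((wl^-1 - wu^-1) * sum_theta_w + wl^-1 + 6).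
Definition kconst (b : nat) : R :=
  sum_theta_w / wu + (1 + wl / (4 * wu * b%:R)) * zeta b - sum_theta.

(* A state records, for each class k = (j, m0) : 'I_b * 'I_M, the number of
   servers holding exactly j+1 jobs whose job in service is in phase m0+1.
   The number of empty servers is N minus the total. *)

Definition cfgpred (c : {ffun 'I_b * 'I_M -> 'I_N.+1}) : bool :=
  (\sum_k (c k : nat) <= N)%N.
Definition cfg := {c : {ffun 'I_b * 'I_M -> 'I_N.+1} | cfgpred c}.

Definition cnt (x : cfg) (k : 'I_b * 'I_M) : nat := val (val x k).

(* S_{i,m} (paper indices i in 1..b, m in 1..M) *)
Definition Sim (x : cfg) (i m : nat) : R :=
  (\sum_(k : 'I_b * 'I_M | (i <= k.1.+1)%N && (k.2.+1 == m)%N) cnt x k)%:R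
  / N%:R.
Definition Si (x : cfg) (i : nat) : R := \sum_(1 <= m < M.+1) Sim x i m.
Definition Ssum (x : cfg) : R := \sum_(1 <= i < b.+1) Si x i.
Definition D1 (x : cfg) : R := \sum_(1 <= m < M.+1) ww m * Sim x 1 m.

(* route x None     = prob. that an arrival in state x goes to an empty server
   route x (Some k) = prob. that it goes to a server of class k *)
Definition valid_policy (route : cfg -> option ('I_b * 'I_M) -> R) : Prop :=
  forall x,
    (forall o, 0 <= route x o) /\ \sum_o route x o = 1 /\
    (0 < route x None -> (\sum_k cnt x k < N)%N) /\
    (forall k, 0 < route x (Some k) -> (0 < cnt x k)%N).

Definition Ab (route : cfg -> option ('I_b * 'I_M) -> R) (x : cfg) : R :=
  \sum_(k : 'I_b * 'I_M | (k.1.+1 == b)%N) route x (Some k).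

Definition ev (j m : nat) (k : 'I_b * 'I_M) : int :=
  (nat_of_bool ((k.1 == j :> nat) && (k.2 == m :> nat)))%:Z.
Definition shift (x y : cfg) (d : 'I_b * 'I_M -> int) : bool :=
  [forall k, (cnt y k)%:Z == (cnt x k)%:Z + d k].

(* Transition rate from x to y (x <> y); lam N = total arrival rate. *)
Definition Qrate (lam : R) (route : cfg -> option ('I_b * 'I_M) -> R)
    (x y : cfg) : R :=
  (* arrival routed to an empty server: it starts service in phase 1 *)
  lam * N%:R * route x None * (shift x y (ev 0 0) : nat)%:R
  (* arrival routed to a non-full busy server (full ones discard the job) *)
  + \sum_(k : 'I_b * 'I_M | (k.1.+1 < b)%N)
      lam * N%:R * route x (Some k) *
      (shift x y (fun l => ev k.1.+1 k.2 l - ev k.1 k.2 l) : nat)%:R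
  (* phase completion m -> m+1 (m < M) *)
  + \sum_(k : 'I_b * 'I_M | (k.2.+1 < M)%N)
      mu k.2.+1 * p k.2.+1 * (cnt x k)%:R *
      (shift x y (fun l => ev k.1 k.2.+1 l - ev k.1 k.2 l) : nat)%:R
  (* job departure; the next job (if any) starts in phase 1 *)
  + \sum_(k : 'I_b * 'I_M)
      ww k.2.+1 * (cnt x k)%:R *
      (shift x y (fun l => (if (0 < k.1)%N then ev k.1.-1 0 l else 0)
                           - ev k.1 k.2 l) : nat)%:R.

Definition irreducible (Q : cfg -> cfg -> R) : Prop :=
  forall x y, connect (fun x y => 0 < Q x y) x y.

Definition stationary (Q : cfg -> cfg -> R) (pi : cfg -> R) : Prop :=
  (forall x, 0 <= pi x) /\ \sum_x pi x = 1 /\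
  (forall y, \sum_x pi x * Q x y = pi y * \sum_z Q y z).

End Model.

Definition lamN {R : realType} (N : nat) (alpha : R) : R :=
  1 - (N%:R : R) `^ (- alpha).
Definition DeltaN (R : realType) (N : nat) : R :=
  ln (N%:R : R) / Num.sqrt (N%:R : R).

Definition bool_ind {R : realType} (P : bool) : R := (nat_of_bool P)%:R.

(* Main.v *)
Require Import Defs.
From HB Require Import structures.
From mathcomp Require Import all_boot all_order all_algebra.
From mathcomp Require Import all_classical all_reals all_analysis.
From mathcomp Require Import ring lra zify.
Import Order.TTheory GRing.Theory Num.Theory.
Local Open Scope ring_scope.

Lemma sum_option (R : realType) (T : finType) (F : option T -> R) :
  \sum_o F o = F None + \sum_x F (Some x).
Proof.
rewrite (bigD1 None) //=; congr (_ + _).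
rewrite (reindex_omap Some id).
- by apply: eq_bigl => x; rewrite eqxx.
- by case.
Qed.

Section S.
Variables (R : realType) (N b M : nat).
Local Notation cfg := (cfg N b M).

Lemma gen_zero (Q : cfg -> cfg -> R) pi (F : cfg -> R) :
  stationary Q pi -> \sum_x pi x * \sum_y Q x y * (F y - F x) = 0.
Proof.
move=> [_ [_ st]].
have E1 : \sum_x pi x * \sum_y Q x y * F y = \sum_y pi y * (\sum_z Q y z) * F y.
  rewrite (eq_bigr (fun x => \sum_y pi x * Q x y * F y)); last first.
    by move=> x _; rewrite mulr_sumr; apply: eq_bigr => y _; rewrite mulrA.
  rewrite exchange_big /=; apply: eq_bigr => y _.
  by rewrite -st -mulr_suml.
have E2 : \sum_x pi x * \sum_y Q x y * (F y - F x) =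
   \sum_x pi x * \sum_y Q x y * F y - \sum_y pi y * (\sum_z Q y z) * F y.
  rewrite -sumrB; apply: eq_bigr => x _.
  rewrite -mulrA -mulrBr; congr (_ * _).
  rewrite mulr_suml -sumrB; apply: eq_bigr => y _; ring.
by rewrite E2 E1 subrr.
Qed.

Lemma shift_uniq (x y z : cfg) d : Defs.shift x y d -> Defs.shift x z d -> y = z.
Proof.
move=> /forallP Hy /forallP Hz; apply: val_inj; apply/ffunP => k.
apply: val_inj => /=.
have := Hy k; have := Hz k; move=> /eqP <- /eqP.
by move/eqP; rewrite eqz_nat => /eqP.
Qed.

Lemma sumz_nat (I : finType) (f : I -> nat) : ((\sum_i f i)%N)%:Z = \sum_i (f i)%:Z.
Proof. by rewrite (big_morph Posz PoszD (erefl _)). Qed.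

Lemma shift_exists (x : cfg) d : (forall l, 0 <= (cnt x l)%:Z + d l) ->
  \sum_l ((cnt x l)%:Z + d l) <= N%:Z -> exists y, Defs.shift x y d.
Proof.
move=> Hnn Hs.
pose n l := absz ((cnt x l)%:Z + d l).
have En l : (n l)%:Z = (cnt x l)%:Z + d l by rewrite /n gez0_abs.
have Hsum : (\sum_l n l <= N)%N.
  by rewrite -lez_nat sumz_nat (eq_bigr _ (fun l _ => En l)).
have Hl l : (n l < N.+1)%N.
  rewrite ltnS; apply: leq_trans Hsum.
  by rewrite (bigD1 l) //= leq_addr.
pose f : {ffun 'I_b * 'I_M -> 'I_N.+1} := [ffun l => inord (n l)].
have Hf : cfgpred f.
  rewrite /cfgpred (eq_bigr n) // => l _; by rewrite ffunE inordK.
exists (Sub f Hf); apply/forallP => l.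
by rewrite /cnt /= ffunE inordK // En.
Qed.

Lemma shift_sum (x : cfg) d (G : cfg -> R) y0 : Defs.shift x y0 d ->
  \sum_y (Defs.shift x y d : nat)%:R * G y = G y0.
Proof.
move=> H0; rewrite (bigD1 y0) //= H0 mul1r big1 ?addr0 // => y Hy.
case Hs: (Defs.shift x y d); last by rewrite mul0r.
by move: Hy; rewrite (@shift_uniq x y y0 d Hs H0) eqxx.
Qed.

Lemma shift_none (x : cfg) d (G : cfg -> R) : (forall y, ~~ Defs.shift x y d) ->
  \sum_y (Defs.shift x y d : nat)%:R * G y = 0.
Proof. by move=> H; rewrite big1 // => y _; rewrite (negbTE (H y)) mul0r. Qed.

Lemma sum_ord_eq (T : nmodType) n (j : 'I_n) (F : nat -> T) :
  \sum_(m < n) (if (j.+1 == m.+1)%N then F m else 0) = F j.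
Proof.
rewrite -big_mkcond /= (big_pred1 j) // => m /=.
Qed.

Lemma sum_le_count n j : (j < n)%N -> (\sum_(i < n) (i <= j)%N)%N = j.+1.
Proof.
move=> Hj; rewrite -(big_mkord xpredT (fun i => nat_of_bool (i <= j)%N)).
rewrite (big_cat_nat (n := j.+1)) //=.
rewrite [X in (_ + X)%N]big1_seq ?addn0; last first.
  move=> i /andP [_]; rewrite mem_index_iota => /andP [H1 _].
  by rewrite leqNgt H1.
rewrite (eq_big_seq (fun _ => 1%N)); last first.
  by move=> i; rewrite mem_index_iota => /andP [_ H]; rewrite ltnS in H; rewrite H.
by rewrite sum_nat_const_nat muln1 subn0.
Qed.

Lemma Ssum_E (x : cfg) :
  Ssum R x = (\sum_k (cnt x k)%:R * (k.1.+1)%:R) / N%:R.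
Proof.
rewrite /Ssum /Si /Sim.
have -> : forall (F : nat -> nat -> R), \sum_(1 <= i < b.+1) \sum_(1 <= m < M.+1) F i m / N%:R
   = (\sum_(1 <= i < b.+1) \sum_(1 <= m < M.+1) F i m) / N%:R.
  by move=> F; rewrite mulr_suml; apply: eq_bigr => i _; rewrite mulr_suml.
congr (_ / _).
rewrite -(eq_bigr _ (fun k _ => natrM R _ _)) -natr_sum.
rewrite (eq_bigr (fun i => ((\sum_(1 <= m < M.+1) \sum_(k : 'I_b * 'I_M | (i <= k.1.+1)%N && (k.2.+1 == m)%N) cnt x k)%N)%:R)); last first.
  by move=> i _; rewrite natr_sum.
rewrite -natr_sum; congr (_%:R).
rewrite big_add1 /= big_mkord.
rewrite (eq_bigr (fun i : 'I_b => \sum_(k : 'I_b * 'I_M) \sum_(m < M) if ((i.+1 <= k.1.+1)%N && (k.2.+1 == m.+1)%N) then cnt x k else 0%N)); last first.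
  move=> i _; rewrite big_add1 /= big_mkord.
  rewrite (eq_bigr (fun m : 'I_M => \sum_(k : 'I_b * 'I_M) if ((i.+1 <= k.1.+1)%N && (k.2.+1 == m.+1)%N) then cnt x k else 0%N)); last by move=> m _; rewrite big_mkcond.
  by rewrite exchange_big.
rewrite exchange_big /=; apply: eq_bigr => k _.
rewrite (eq_bigr (fun i : 'I_b => ((i <= k.1)%N * cnt x k)%N)); last first.
  move=> i _; rewrite ltnS.
  case: (i <= k.1)%N; last by rewrite mul0n big1.
  by rewrite mul1n (@sum_ord_eq _ _ k.2 (fun _ => cnt x k)).
by rewrite -big_distrl /= sum_le_count // mulnC.
Qed.

Lemma D1_E (mu p : nat -> R) (x : cfg) :
  D1 mu p x = (\sum_(k : 'I_b * 'I_M) ww M mu p (k.2.+1) * (cnt x k)%:R) / N%:R.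
Proof.
rewrite /D1 /Sim mulr_suml big_add1 /= big_mkord.
rewrite (eq_bigr (fun m : 'I_M => \sum_(k : 'I_b * 'I_M)
   (if (k.2.+1 == m.+1)%N then ww M mu p m.+1 * (cnt x k)%:R / N%:R else 0))); last first.
  move=> m _; rewrite natr_sum mulr_suml mulr_sumr big_mkcond /=; apply: eq_bigr => k _.
  by case: ifP => _; rewrite ?mulrA ?mulr0 ?mul0r.
rewrite exchange_big /=; apply: eq_bigr => k _.
exact: (@sum_ord_eq _ _ k.2 (fun m => ww M mu p m.+1 * (cnt x k)%:R / N%:R)).
Qed.

Lemma ev_eq (l0 l : 'I_b * 'I_M) : ev l0.1 l0.2 l = (nat_of_bool (l == l0))%:Z.
Proof.
rewrite /ev; congr (Posz (nat_of_bool _)).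
Qed.

Lemma sum_ev (l0 : 'I_b * 'I_M) j m (f : 'I_b * 'I_M -> R) :
  (l0.1 : nat) = j -> (l0.2 : nat) = m ->
  \sum_l (ev j m l)%:~R * f l = f l0.
Proof.
move=> <- <-; rewrite (bigD1 l0) //= ev_eq eqxx mul1r big1 ?addr0 // => l Hl.
by rewrite ev_eq (negbTE Hl) mul0r.
Qed.

Lemma sum_evz (l0 : 'I_b * 'I_M) j m :
  (l0.1 : nat) = j -> (l0.2 : nat) = m -> \sum_(l : 'I_b * 'I_M) ev j m l = 1.
Proof.
move=> <- <-; rewrite (bigD1 l0) //= ev_eq eqxx big1 ?addr0 // => l Hl.
by rewrite ev_eq (negbTE Hl).
Qed.

Lemma sum_evz_le j m : \sum_(l : 'I_b * 'I_M) ev j m l <= 1.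
Proof.
case: (pickP (fun l : 'I_b * 'I_M => (l.1 == j :> nat) && (l.2 == m :> nat))).
  move=> l0 /andP [/eqP H1 /eqP H2]; by rewrite (@sum_evz l0 j m H1 H2).
move=> H; rewrite big1 // => l _; by rewrite /ev H.
Qed.

Lemma ev_ge0 j m (l : 'I_b * 'I_M) : 0 <= ev j m l.
Proof. by []. Qed.

Lemma ev_le (k l : 'I_b * 'I_M) : ev k.1 k.2 l <= (nat_of_bool (l == k))%:Z.
Proof. by rewrite ev_eq. Qed.

Lemma intr_natz n : ((n%:Z)%:~R : R) = n%:R.
Proof. by []. Qed.

Lemma Ssum_shift (x y : cfg) d : Defs.shift x y d ->
  Ssum R y = Ssum R x + (\sum_k (d k)%:~R * (k.1.+1)%:R) / N%:R.
Proof.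
move=> /forallP H; rewrite !Ssum_E -mulrDl; congr (_ / _).
rewrite -big_split /=; apply: eq_bigr => k _.
have := H k => /eqP /(congr1 (fun z : int => z%:~R : R)).
by rewrite intrD !intr_natz -mulrDl => ->.
Qed.

Lemma cfg_sum (x : cfg) : \sum_l (cnt x l)%:Z <= N%:Z.
Proof. by rewrite -sumz_nat lez_nat; case: x => c Hc. Qed.

Lemma trans_lb (x : cfg) d c L (F : cfg -> R) : 0 <= c ->
  (0 < c -> exists y, Defs.shift x y d) ->
  (forall y, Defs.shift x y d -> L <= F y - F x) ->
  c * L <= c * \sum_y (Defs.shift x y d : nat)%:R * (F y - F x).
Proof.
rewrite le0r => /orP [/eqP -> | Hc] Hex HL; first by rewrite !mul0r.
have [y0 Hy0] := Hex Hc.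
rewrite (shift_sum x d (fun y => F y - F x) y0 Hy0).
apply: ler_wpM2l; [exact: ltW | exact: HL].
Qed.

Lemma trans_zero (x : cfg) d (F : cfg -> R) :
  (forall y, Defs.shift x y d -> F y = F x) ->
  \sum_y (Defs.shift x y d : nat)%:R * (F y - F x) = 0.
Proof.
move=> H; rewrite big1 // => y _.
by case Hs: (Defs.shift x y d); rewrite ?mul0r // H // subrr mulr0.
Qed.
End S.

Section G.
Variables (R : realType) (eta Delta : R).
Definition gf (t : R) := - (Num.max (t - eta) 0)^+2 / (2 * Delta).
Definition gd (t : R) := - (Num.max (t - eta) 0) / Delta.

Lemma g_taylor a t : 0 < Delta -> gd a * t - t^+2 / (2*Delta) <= gf (a + t) - gf a.
Proof.
move=> HD; rewrite /gf /gd.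
set u := Num.max (a - eta) 0; set v := Num.max (a + t - eta) 0.
have Hu0 : 0 <= u by rewrite le_max lexx orbT.
have Hu1 : a - eta <= u by rewrite le_max lexx.
have Hv : v ^+ 2 <= (u + t) ^+ 2.
  rewrite /v; case: (leP (a + t - eta) 0) => H.
    by rewrite expr0n /= sqr_ge0.
  nra.
rewrite -subr_ge0.
have -> : - v ^+ 2 / (2 * Delta) - - u ^+ 2 / (2 * Delta) - (- u / Delta * t - t ^+ 2 / (2 * Delta))
   = ((u + t) ^+ 2 - v ^+ 2) / (2 * Delta).
  by field; rewrite gt_eqF.
by apply: divr_ge0; [rewrite subr_ge0 | lra].
Qed.
End G.

Lemma sum_swap (R : realType) (K T : finType) (P : pred K) (c : K -> R) (sh : K -> T -> R) (G : T -> R) :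
  \sum_y (\sum_(k | P k) c k * sh k y) * G y = \sum_(k | P k) c k * \sum_y sh k y * G y.
Proof.
under eq_bigr do rewrite mulr_suml.
rewrite exchange_big /=; apply: eq_bigr => k _.
by rewrite mulr_sumr; apply: eq_bigr => y _; rewrite mulrA.
Qed.

Lemma pos_of_prod (R : realType) (a r : R) : 0 <= a -> 0 <= r -> 0 < a * r -> 0 < r.
Proof. move=> Ha Hr H; rewrite lt0r Hr andbT; apply/eqP => E; move: H; by rewrite E mulr0 ltxx. Qed.

Section D.
Variables (R : realType) (N b M : nat) (mu p : nat -> R) (lam : R)
  (route : cfg N b M -> option ('I_b * 'I_M) -> R) (eta Delta : R).
Hypotheses (Hb : (1 <= b)%N) (HM : (1 <= M)%N)
  (Hmu : forall m, (1 <= m <= M)%N -> 0 < mu m)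
  (Hp : forall m, (1 <= m < M)%N -> 0 <= p m < 1)
  (Hlam : 0 <= lam) (HD : 0 < Delta) (Hpol : valid_policy route).
Local Notation cfg := (cfg N b M).
Local Notation F := (fun y : cfg => gf R eta Delta (Ssum R y)).
Local Notation T x d := (\sum_y (Defs.shift x y d : nat)%:R * (F y - F x)).

Lemma ww_ge0 m : (1 <= m <= M)%N -> 0 <= ww M mu p m.
Proof.
move=> /andP [H1 H2]; rewrite /ww; case: ifP => H.
  have := Hp m; rewrite H1 H => /(_ isT) /andP [_ Hp1].
  by apply: mulr_ge0; [rewrite subr_ge0 ltW | apply: ltW; apply: Hmu; rewrite H1 H2].
by apply: ltW; apply: Hmu; rewrite H1 H2.
Qed.

Lemma nonneg_dk (x : cfg) (k : 'I_b * 'I_M) (e : 'I_b * 'I_M -> int) :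
  (0 < cnt x k)%N -> (forall l, 0 <= e l) ->
  forall l, 0 <= (cnt x l)%:Z + (e l - ev k.1 k.2 l).
Proof.
move=> Hc He l; rewrite ev_eq; have := He l.
case: (eqVneq l k) => [-> | _] /=; last by rewrite subr0 => H; apply: addr_ge0.
move: Hc; rewrite -ltz_nat => Hc H; lia.
Qed.

Lemma sum_dk (x : cfg) (k : 'I_b * 'I_M) (e : 'I_b * 'I_M -> int) :
  \sum_l e l <= 1 ->
  \sum_l ((cnt x l)%:Z + (e l - ev k.1 k.2 l)) <= N%:Z.
Proof.
move=> He; rewrite big_split /= sumrB (@sum_evz b M k k.1 k.2) //.
apply: (le_trans _ (@cfg_sum N b M x)); by rewrite gerDl subr_le0.
Qed.

Lemma Q_decomp (x : cfg) :
  \sum_y Qrate mu p lam route x y * (F y - F x) =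
    lam * N%:R * route x None * T x (ev 0 0)
  + \sum_(k : 'I_b * 'I_M | (k.1.+1 < b)%N) lam * N%:R * route x (Some k) *
        T x (fun l => ev k.1.+1 k.2 l - ev k.1 k.2 l)
  + \sum_(k : 'I_b * 'I_M | (k.2.+1 < M)%N) mu k.2.+1 * p k.2.+1 * (cnt x k)%:R *
        T x (fun l => ev k.1 k.2.+1 l - ev k.1 k.2 l)
  + \sum_(k : 'I_b * 'I_M) ww M mu p k.2.+1 * (cnt x k)%:R *
        T x (fun l => (if (0 < k.1)%N then ev k.1.-1 0 l else 0) - ev k.1 k.2 l).
Proof.
rewrite /Qrate.
under eq_bigr do rewrite !mulrDl.
rewrite !big_split /= !sum_swap; congr (_ + _ + _ + _).
by rewrite mulr_sumr; apply: eq_bigr => y _; rewrite mulrA.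
Qed.

Definition Lt (x : cfg) (t : R) := gd R eta Delta (Ssum R x) * (t / N%:R) - (t / N%:R) ^+ 2 / (2 * Delta).

Lemma F_step (x y : cfg) d t : Defs.shift x y d ->
  \sum_k (d k)%:~R * (k.1.+1)%:R = t -> Lt x t <= F y - F x.
Proof.
move=> Hs Ht; rewrite /= (@Ssum_shift R N b M x y d Hs) Ht /Lt.
exact: g_taylor.
Qed.

Lemma TA_lb (x : cfg) : lam * N%:R * route x None * Lt x 1 <=
   lam * N%:R * route x None * T x (ev 0 0).
Proof.
have [Hr0 [Hr1 [HrN HrS]]] := Hpol x.
apply: trans_lb.
- by apply: mulr_ge0 => //; apply: mulr_ge0.
- move=> Hc; have Hr : 0 < route x None.
    by apply: (@pos_of_prod R (lam * N%:R) _ _ (Hr0 None) Hc); apply: mulr_ge0.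
  have Hlt := HrN Hr.
  apply: shift_exists; first by move=> l; apply: addr_ge0.
  rewrite big_split /=.
  have := sum_evz_le b M 0 0.
  move: Hlt; rewrite -ltz_nat sumz_nat => Hlt Hle.
  apply: (le_trans (lerD (lexx _) Hle)); by rewrite lezD1.
- move=> y Hy; apply: (@F_step x y _ 1 Hy).
  by rewrite (@sum_ev R b M (Ordinal Hb, Ordinal HM) 0 0).
Qed.

Lemma TB_lb (x : cfg) (k : 'I_b * 'I_M) : (k.1.+1 < b)%N ->
  lam * N%:R * route x (Some k) * Lt x 1 <=
  lam * N%:R * route x (Some k) * T x (fun l => ev k.1.+1 k.2 l - ev k.1 k.2 l).
Proof.
move=> Hk; have [Hr0 [Hr1 [HrN HrS]]] := Hpol x.
apply: trans_lb.
- by apply: mulr_ge0 => //; apply: mulr_ge0.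
- move=> Hc; have Hr : 0 < route x (Some k).
    by apply: (@pos_of_prod R (lam * N%:R) _ _ (Hr0 _) Hc); apply: mulr_ge0.
  have Hlt := HrS k Hr.
  apply: shift_exists; first exact: nonneg_dk.
  by apply: sum_dk; apply: sum_evz_le.
- move=> y Hy; apply: (@F_step x y _ 1 Hy).
  rewrite (eq_bigr (fun l => (ev k.1.+1 k.2 l)%:~R * (l.1.+1)%:R - (ev k.1 k.2 l)%:~R * (l.1.+1)%:R)); last first.
    by move=> l _; rewrite intrB mulrBl.
  rewrite sumrB (@sum_ev R b M (Ordinal Hk, k.2) k.1.+1 k.2) //.
  rewrite (@sum_ev R b M k k.1 k.2) //=.
  by rewrite -addn1 natrD addrAC subrr add0r.
Qed.

Lemma TC_zero (x : cfg) (k : 'I_b * 'I_M) : (k.2.+1 < M)%N ->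
  T x (fun l => ev k.1 k.2.+1 l - ev k.1 k.2 l) = 0.
Proof.
move=> Hk; apply: trans_zero => y Hy /=.
rewrite (@Ssum_shift R N b M x y _ Hy).
rewrite (eq_bigr (fun l => (ev k.1 k.2.+1 l)%:~R * (l.1.+1)%:R - (ev k.1 k.2 l)%:~R * (l.1.+1)%:R)); last first.
  by move=> l _; rewrite intrB mulrBl.
rewrite sumrB (@sum_ev R b M (k.1, Ordinal Hk) k.1 k.2.+1) //.
by rewrite (@sum_ev R b M k k.1 k.2) //= subrr mul0r addr0.
Qed.

Lemma TD_lb (x : cfg) (k : 'I_b * 'I_M) :
  ww M mu p k.2.+1 * (cnt x k)%:R * Lt x (-1) <=
  ww M mu p k.2.+1 * (cnt x k)%:R *
    T x (fun l => (if (0 < k.1)%N then ev k.1.-1 0 l else 0) - ev k.1 k.2 l).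
Proof.
have Hw : 0 <= ww M mu p k.2.+1 by apply: ww_ge0; rewrite ltn_ord.
apply: trans_lb.
- by apply: mulr_ge0.
- move=> Hc; have Hr : 0 < ((cnt x k)%:R : R).
    by apply: (@pos_of_prod R _ _ Hw _ Hc).
  rewrite ltr0n in Hr.
  apply: shift_exists; first by apply: nonneg_dk => // l; case: ifP.
  apply: sum_dk; case: (0 < k.1)%N; first exact: sum_evz_le.
  by rewrite big1.
- move=> y Hy; apply: (@F_step x y _ (-1) Hy).
  rewrite (eq_bigr (fun l => (if (0 < k.1)%N then (ev k.1.-1 0 l)%:~R * (l.1.+1)%:R else 0) - (ev k.1 k.2 l)%:~R * (l.1.+1)%:R)); last first.
    by move=> l _; rewrite intrB mulrBl; case: ifP; rewrite ?mul0r.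
  rewrite sumrB (@sum_ev R b M k k.1 k.2) //=.
  case: (posnP k.1) => Hk1.
    by rewrite big1 // Hk1 sub0r.
  have Hk1' : (k.1.-1 < b)%N by apply: (leq_ltn_trans (leq_pred _)); exact: ltn_ord.
  rewrite (@sum_ev R b M (Ordinal Hk1', Ordinal HM) k.1.-1 0) //= prednK //.
  by rewrite -addn1 natrD opprD addrA subrr add0r.
Qed.

Lemma route_split (x : cfg) :
  route x None + \sum_(k : 'I_b * 'I_M | (k.1.+1 < b)%N) route x (Some k) = 1 - Ab route x.
Proof.
have [_ [Hr1 _]] := Hpol x.
rewrite sum_option (bigID (fun k : 'I_b * 'I_M => (k.1.+1 < b)%N)) /= in Hr1.
have -> : Ab route x = \sum_(k : 'I_b * 'I_M | ~~ (k.1.+1 < b)%N) route x (Some k).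
  rewrite /Ab; apply: eq_bigl => k; by rewrite -leqNgt eqn_leq ltn_ord.
rewrite -Hr1; ring.
Qed.

Lemma drift_lb (x : cfg) :
  lam * N%:R * (1 - Ab route x) * Lt x 1
  + (\sum_(k : 'I_b * 'I_M) ww M mu p k.2.+1 * (cnt x k)%:R) * Lt x (-1)
  <= \sum_y Qrate mu p lam route x y * (F y - F x).
Proof.
rewrite Q_decomp.
rewrite [X in _ <= _ + X + _]big1 ?addr0; last by move=> k Hk; rewrite TC_zero ?mulr0.
have E1 : forall L, lam * N%:R * (1 - Ab route x) * L = lam * N%:R * route x None * L
   + \sum_(k : 'I_b * 'I_M | (k.1.+1 < b)%N) lam * N%:R * route x (Some k) * L.
  move=> L; rewrite -route_split mulrDr mulrDl mulr_sumr mulr_suml.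
  by congr (_ + _); apply: eq_bigr => k _; rewrite mulrA.
have E2 : forall L, (\sum_(k : 'I_b * 'I_M) ww M mu p k.2.+1 * (cnt x k)%:R) * L
   = \sum_(k : 'I_b * 'I_M) ww M mu p k.2.+1 * (cnt x k)%:R * L.
  by move=> L; rewrite mulr_suml.
rewrite E1 E2.
apply: lerD; first apply: lerD.
- exact: TA_lb.
- apply: ler_sum => k Hk; exact: TB_lb.
- apply: ler_sum => k _; exact: TD_lb.
Qed.
End D.
Lemma final_arith (R : realType) (u Dl Nr lam A D mu I : R) :
 0 < Dl -> Dl <= 2 -> 1 <= Nr -> 0 <= lam <= 1 -> 0 <= A -> 0 <= D <= mu -> 1 <= mu -> 0 <= u ->
 (I = 1 \/ (I = 0 /\ u * Nr <= 1)) ->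
 u <= (-u/Dl) * (lam*A - lam - Dl + D) * I + (5*mu+lam)/(Nr*Dl)
   + (lam * Nr * (1-A) * ((-u/Dl) * (1/Nr) - (1/Nr)^+2/(2*Dl))
      + (Nr * D) * ((-u/Dl) * (-1/Nr) - (-1/Nr)^+2/(2*Dl))).
Proof.
move=> HD HD2 HN /andP [Hl0 Hl1] HA /andP [HD0 HDm] Hmu Hu HI.
rewrite -subr_ge0.
set w := u * Nr in HI *.
have -> : (-u/Dl) * (lam*A - lam - Dl + D) * I + (5*mu+lam)/(Nr*Dl)
   + (lam * Nr * (1-A) * ((-u/Dl) * (1/Nr) - (1/Nr)^+2/(2*Dl))
      + (Nr * D) * ((-u/Dl) * (-1/Nr) - (-1/Nr)^+2/(2*Dl))) - u
  = (-2 * w * (lam*A - lam - Dl + D) * I + 2*(5*mu+lam) - lam*(1-A)*(2*w+1)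
     + D*(2*w-1) - 2*w*Dl) / (2*Dl*Nr).
  rewrite /w; field.
  by apply/andP; split; apply/eqP; lra.
apply: divr_ge0; last first.
  by apply: mulr_ge0; [apply: mulr_ge0; lra | lra].
have Hw : 0 <= w by rewrite /w; apply: mulr_ge0 => //; lra.
clearbody w.
have HlA : 0 <= lam * A by apply: mulr_ge0.
case: HI => [-> | [-> Hw1]].
  nra.
have h1 : 0 <= lam * A * (2 * w + 1) by apply: mulr_ge0 => //; lra.
have h2 : lam * w <= lam by nra.
have h3 : 0 <= D * w by apply: mulr_ge0.
have h4 : w * Dl <= 2 by nra.
nra.
Qed.

Section Facts.
Variables (R : realType) (M : nat) (mu p : nat -> R).
Hypotheses (HM : (1 <= M)%N)
  (Hmu : forall m, (1 <= m <= M)%N -> 0 < mu m)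
  (Hp : forall m, (1 <= m < M)%N -> 0 <= p m < 1)
  (Hv : \sum_(1 <= m < M.+1) vv mu p m = 1).

Lemma mumax_ge m : (1 <= m <= M)%N -> mu m <= mumax M mu.
Proof.
move=> Hm; rewrite /mumax.
apply: (le_bigmax_seq (mu 1) m xpredT mu) => //.
by rewrite mem_index_iota ltnS.
Qed.

Lemma ww_le m : (1 <= m <= M)%N -> ww M mu p m <= mu m.
Proof.
move=> /andP [H1 H2]; rewrite /ww; case: ifP => H //.
have := Hp m; rewrite H1 H => /(_ isT) /andP [Hp0 _].
have := Hmu m; rewrite H1 H2 => /(_ isT) Hm.
rewrite mulrBl mul1r gerBl; exact: mulr_ge0 (ltW Hm).
Qed.

Lemma mu1_ge1 : 1 <= mu 1.
Proof.
have Hm1 : 0 < mu 1 by apply: Hmu; by rewrite leqnn HM.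
have Hv1 : vv mu p 1 <= 1.
  rewrite -Hv big_ltn // lerDl big_nat_cond; apply: sumr_ge0 => m /andP [/andP [H1 H2] _].
  apply: divr_ge0; last by apply: ltW; apply: Hmu; rewrite (ltnW H1) -ltnS.
  rewrite big_nat_cond; apply: prodr_ge0 => i /andP [/andP [Hi1 Hi2] _].
  have := Hp i; rewrite Hi1 (leq_trans Hi2) //= => /(_ isT) /andP [] //.
move: Hv1; rewrite /vv big_geq // div1r.
rewrite invf_le1 //.
Qed.
End Facts.

Lemma lam_bounds (R : realType) (N : nat) (alpha : R) : (1 <= N)%N -> 0 <= alpha ->
  0 <= lamN N alpha <= 1.
Proof.
move=> HN Ha; rewrite /lamN; apply/andP; split; last by rewrite gerBl powR_ge0.
rewrite subr_ge0; apply: (@le_trans _ _ ((N%:R : R) `^ 0)); last by rewrite powRr0.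
apply: ler_powR; first by rewrite ler1n.
by rewrite oppr_le0.
Qed.

Lemma Delta_facts (R : realType) (N : nat) : (2 <= N)%N ->
  [/\ 0 < DeltaN R N, DeltaN R N <= 2 &
      Num.sqrt (N%:R : R) * ln (N%:R : R) = N%:R * DeltaN R N].
Proof.
move=> HN.
have HN1 : (1 : R) < N%:R by rewrite ltr1n.
have Hs : 0 < Num.sqrt (N%:R : R) by rewrite sqrtr_gt0; lra.
have Hss : Num.sqrt (N%:R : R) * Num.sqrt (N%:R) = N%:R.
  by rewrite -expr2 sqr_sqrtr //; lra.
have Hln : 0 < ln (N%:R : R) by apply: ln_gt0.
have Hle : ln (N%:R : R) <= 2 * Num.sqrt (N%:R : R).
  rewrite -{1}Hss lnM ?posrE //.
  have := @le_ln1Dx R (Num.sqrt (N%:R) - 1).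
  have E : 1 + (Num.sqrt (N%:R : R) - 1) = Num.sqrt (N%:R : R) by ring.
  rewrite E => H; have Hl1 : -1 < Num.sqrt (N%:R : R) - 1 by lra.
  have := H Hl1; lra.
rewrite /DeltaN; split.
- by apply: divr_gt0.
- by rewrite ler_pdivrMr.
- move: Hss Hs; set s := Num.sqrt _; set l := ln _ => Hss Hs.
  rewrite -Hss; field; by rewrite gt_eqF.
Qed.

Theorem lemma7 (R : realType) (N b M : nat) (alpha : R) (mu p : nat -> R)
    (route : cfg N b M -> option ('I_b * 'I_M) -> R) (pi : cfg N b M -> R) :
  let lam := lamN N alpha in
  let Delta := DeltaN R N in
  let eta := lam + kconst M mu p b * Delta in
  let h := fun x : R => Num.max (x - eta) 0 in
  let g' := fun x : R => - (Num.max (x - eta) 0) / Delta in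
  (2 <= N)%N -> (1 <= b)%N -> (1 <= M)%N ->
  0 < alpha < 2^-1 ->
  (forall m, (1 <= m <= M)%N -> 0 < mu m) ->
  (forall m, (1 <= m < M)%N -> 0 <= p m < 1) ->
  \sum_(1 <= m < M.+1) vv mu p m = 1 ->
  0 < xi M mu p < 1 ->
  valid_policy route ->
  irreducible (Qrate mu p lam route) ->
  stationary (Qrate mu p lam route) pi ->
  let J1 := \sum_x pi x *
      (g' (Ssum R x) * (lam * Ab route x - lam - Delta + D1 mu p x)
       * bool_ind (eta + (N%:R)^-1 < Ssum R x)) in
  \sum_x pi x * h (Ssum R x)
    <= J1 + (5 * mumax M mu + lam) / (Num.sqrt N%:R * ln (N%:R : R)).
Proof.
move=> lam Delta eta h g' HN Hb HM /andP [Ha0 Ha1] Hmu Hp Hv Hxi Hpol Hirr Hst; cbv zeta.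
have [HD0 HD2 HsN] := Delta_facts R N HN.
have HN1 : (1 <= N)%N by apply: leq_trans HN.
have /andP [Hl0 Hl1] := lam_bounds R N alpha HN1 (ltW Ha0).
have Hmu1 : 1 <= mu 1 by apply: (@mu1_ge1 R M mu p)...
have Hmm : 1 <= mumax M mu.
  by apply: (le_trans Hmu1); apply: mumax_ge; rewrite leqnn HM.
pose F := fun y : cfg N b M => gf R eta Delta (Ssum R y).
have H0 := gen_zero R N b M (Qrate mu p lam route) pi F Hst.
pose W := fun x : cfg N b M => \sum_(k : 'I_b * 'I_M) ww M mu p k.2.+1 * (cnt x k)%:R.
pose dr := fun x => lam * N%:R * (1 - Ab route x) * Lt R N b M eta Delta x 1
  + W x * Lt R N b M eta Delta x (-1).
have Hdr : \sum_x pi x * dr x <= 0.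
  rewrite -[X in _ <= X]H0; apply: ler_sum => x _; apply: ler_wpM2l; first by case: Hst.
  exact: (@drift_lb R N b M mu p lam route eta Delta Hb HM Hmu Hp Hl0 HD0 Hpol x).
set E := (5 * mumax M mu + lam) / _.
have HE : E = (5 * mumax M mu + lam) / (N%:R * Delta) by rewrite /E HsN.
pose Jt := fun x => g' (Ssum R x) * (lam * Ab route x - lam - Delta + D1 mu p x)
       * bool_ind (eta + (N%:R)^-1 < Ssum R x).
have Hpt : forall x, h (Ssum R x) <= Jt x + E + dr x.
  move=> x.
  have HNr : (0 : R) < N%:R by rewrite ltr0n.
  have HW0 : 0 <= W x.
    apply: sumr_ge0 => k _; apply: mulr_ge0 => //.
    by apply: (@ww_ge0 R M mu p Hmu Hp); rewrite ltn_ord.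
  have HWle : W x <= mumax M mu * N%:R.
    apply: (@le_trans _ _ (\sum_(k : 'I_b * 'I_M) mumax M mu * (cnt x k)%:R)).
      apply: ler_sum => k _; apply: ler_wpM2r => //.
      have Hk : (1 <= k.2.+1 <= M)%N by rewrite ltn_ord.
      exact: (le_trans (@ww_le R M mu p Hmu Hp _ Hk) (@mumax_ge R M mu _ Hk)).
    rewrite -mulr_sumr ler_wpM2l ?(le_trans ler01) //.
    by rewrite -natr_sum ler_nat; exact: (valP x).
  have HW : W x = N%:R * D1 mu p x.
    by rewrite D1_E /W mulrC divfK // gt_eqF.
  have HA : 0 <= Ab route x.
    by apply: sumr_ge0 => k _; have [H _] := Hpol x; apply: H.
  have HD1 : 0 <= D1 mu p x <= mumax M mu.
    apply/andP; split.
      by rewrite D1_E; apply: divr_ge0 => //; apply: ltW.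
    by rewrite D1_E ler_pdivrMr.
  set u := Num.max (Ssum R x - eta) 0.
  have Hu : 0 <= u by rewrite /u le_max lexx orbT.
  have Hdrx : dr x = lam * N%:R * (1 - Ab route x) * ((-u/Delta) * (1/N%:R) - (1/N%:R)^+2/(2*Delta))
     + (N%:R * D1 mu p x) * ((-u/Delta) * (-1/N%:R) - (-1/N%:R)^+2/(2*Delta)).
    by rewrite /dr HW /Lt /gd.
  rewrite Hdrx HE /Jt /h /g' -/u.
  apply: final_arith => //.
  - by rewrite ler1n; apply: leq_trans HN.
  - by rewrite Hl0 Hl1.
  - rewrite /bool_ind; case: ltP => HI; [by left | right; split => //].
    rewrite -ler_pdivlMr // mul1r /u.
    rewrite ge_max; apply/andP; split; [lra | by rewrite invr_ge0 ltW].
have [Hpi0 [Hpi1 _]] := Hst.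
apply: (le_trans (ler_sum _ (fun x _ => ler_wpM2l (Hpi0 x) (Hpt x)))).
have -> : \sum_x pi x * (Jt x + E + dr x) = \sum_x pi x * Jt x + E * \sum_x pi x + \sum_x pi x * dr x.
  rewrite mulr_sumr -!big_split /=; apply: eq_bigr => x _; ring.
rewrite Hpi1 mulr1 -[X in _ <= X]addr0 lerD2l.
exact: Hdr.
Qed.
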